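(* Let $n\ge1$, let $\mu,\nu\in\mathbb{R}^n$ be probability vectors, let $\gamma>0$, and let $\phi$ satisfy the Bregman assumption in the context with $\phi'_0=-\infty$. Let $\hat X,\tilde X\in U_\phi$, and let $\hat C,\tilde C\in S_h$ be the unique matrices in $S_h$ with $\mathcal{F}(\hat C)=\hat X$ and $\mathcal{F}(\tilde C)=\tilde X$. Then $$\|\hat C-\tilde C\|_\infty\le 2\gamma\,\|\phi'(\hat X)-\phi'(\tilde X)\|_\infty,$$ where $\phi'(X)$ denotes entrywise application and $\|\cdot\|_\infty$ is the maximum absolute entry.
   Context: Probability vectors have nonnegative entries summing to $1$. $\mathcal{U}(\mu,\nu):=\{X\in\mathbb{R}_+^{n\times n}: X\mathbf{1}=\mu,\ X^\top\mathbf{1}=\nu\}$. Bregman assumption on $\phi:\mathbb{R}\to(-\infty,+\infty]$: $I=\operatorname{dom}\phi$ is an interval with $(0,1)\subseteq\operatorname{int}(I)$; $\phi$ is of Legendre type (proper, closed, strictly convex on $\operatorname{int}(\operatorname{dom}\phi)$, essentially smooth); $\phi$ is $C^1$ on $\operatorname{int}(I)$. $\phi(X):=\sum_{i,j}\phi(X_{ij})$. $\mathcal{F}(C):=\arg\min_{X\in\mathcal{U}(\mu,\nu)}\{\langle C,X\rangle+\gamma\phi(X)\}$. $\phi'_0:=\lim_{x\to0^+}\phi'(x)$, $\phi'_1:=\lim_{x\to1^-}\phi'(x)$. With $\phi'_0=-\infty$: $\mathcal{T}_\phi(\mu,\nu):=\mathcal{U}(\mu,\nu)\cap(0,1]^{n\times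 n}$ if $\phi'_1$ is finite and $\mathcal{U}(\mu,\nu)\cap(0,1)^{n\times n}$ if $\phi'_1=+\infty$. $S_h:=\{C\in\mathbb{R}_+^{n\times n}: C=C^\top,\ \operatorname{diag}(C)=0\}$. $(G_\phi^\gamma(X))_{ij}:=\frac{\gamma}{2}\big(\phi'(X_{ii})+\phi'(X_{jj})-\phi'(X_{ij})-\phi'(X_{ji})\big)$, and $U_\phi:=\{X\in\mathcal{T}_\phi(\mu,\nu): (G_\phi^\gamma(X))_{ij}\ge0\ \forall i,j\}$. (It is known that $\mathcal{F}$ restricted to $S_h$ is a bijection onto $U_\phi$, so $\hat C,\tilde C$ are well defined.) *)

(* Defs.v *)
From HB Require Import structures.
From mathcomp Require Import all_boot all_order all_algebra.
From mathcomp Require Import all_classical all_reals all_analysis.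
Set Implicit Arguments. Unset Strict Implicit. Unset Printing Implicit Defensive.
Import Order.TTheory GRing.Theory Num.Theory.
Import numFieldNormedType.Exports.
Local Open Scope classical_set_scope.
Local Open Scope ring_scope.

Section Bregman.
Variable R : realType.

Definition edom (phi : R -> \bar R) : set R := [set x | (phi x < +oo)%E].

(* phi' : the (real) derivative of phi, meaningful on interior (edom phi) *)
Definition phid (phi : R -> \bar R) (x : R) : R := derive1 (fun y => fine (phi y)) x.

Definition proper_fun (phi : R -> \bar R) : Prop :=
  (exists x, (phi x < +oo)%E) /\ (forall x, (-oo < phi x)%E).

(* closed = lower semicontinuous *)
Definition lsc_fun (phi : R -> \bar R) : Prop :=
  forall x (a : R), (a%:E < phi x)%E -> \forall y \near x, (a%:E < phi y)%E.

Definition convex_efun (phi : R -> \bar R) : Prop :=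
  forall x y t : R, (0 < t < 1)%R ->
    (phi (t * x + (1 - t) * y)%R <= t%:E * phi x + (1 - t)%:E * phi y)%E.

Definition strictly_convex_on (A : set R) (phi : R -> \bar R) : Prop :=
  forall x y t : R, A x -> A y -> x != y -> (0 < t < 1)%R ->
    (phi (t * x + (1 - t) * y)%R < t%:E * phi x + (1 - t)%:E * phi y)%E.

(* essentially smooth (one-dimensional form of Rockafellar's definition) *)
Definition essentially_smooth (phi : R -> \bar R) : Prop :=
  let D := interior (edom phi) in
  (D !=set0) /\
  (forall x, D x -> derivable (fun y => fine (phi y)) x 1) /\
  (forall (u : R^nat) (b : R), (forall k, D (u k)) ->
      closure D b -> ~ D b -> u @ \oo --> b ->
      (fun k => `|phid phi (u k)|) @ \oo --> +oo).

Definition legendre_type (phi : R -> \bar R) : Prop :=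
  [/\ proper_fun phi, lsc_fun phi, convex_efun phi,
      strictly_convex_on (interior (edom phi)) phi & essentially_smooth phi].

Definition bregman_assumption (phi : R -> \bar R) : Prop :=
  [/\ is_interval (edom phi),
      `]0, 1[ `<=` interior (edom phi),
      legendre_type phi &
      (forall x, interior (edom phi) x -> {for x, continuous (phid phi)})].

Variable n : nat.

Definition prob_vec (mu : 'cV[R]_n) : Prop :=
  (forall i, 0 <= mu i 0) /\ \sum_i mu i 0 = 1.

Definition transport_polytope (mu nu : 'cV[R]_n) : set 'M[R]_n :=
  [set X : 'M[R]_n | (forall i j, 0 <= X i j) /\
           X *m const_mx 1 = mu /\ X^T *m const_mx 1 = nu].

Definition objective (gamma : R) (phi : R -> \bar R) (C X : 'M[R]_n) : \bar R :=
  ((\sum_i \sum_j C i j * X i j)%:E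
   + gamma%:E * \sum_i \sum_j phi (X i j))%E.

Definition F_argmin (mu nu : 'cV[R]_n) (gamma : R) (phi : R -> \bar R)
    (C : 'M[R]_n) : set 'M[R]_n :=
  [set X : 'M[R]_n | transport_polytope mu nu X /\
     forall Y, transport_polytope mu nu Y ->
       (objective gamma phi C X <= objective gamma phi C Y)%E].

Definition T_phi (mu nu : 'cV[R]_n) (phi : R -> \bar R) : set 'M[R]_n :=
  [set X : 'M[R]_n | transport_polytope mu nu X /\
     (forall i j, 0 < X i j <= 1) /\
     (phid phi x @[x --> 1^'-] --> +oo -> forall i j, X i j < 1)].

Definition S_h : set 'M[R]_n :=
  [set C : 'M[R]_n | (forall i j, 0 <= C i j) /\ C^T = C /\ forall i, C i i = 0].

Definition G_phi (gamma : R) (phi : R -> \bar R) (X : 'M[R]_n) : 'M[R]_n :=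
  \matrix_(i, j) (gamma / 2 * (phid phi (X i i) + phid phi (X j j)
                               - phid phi (X i j) - phid phi (X j i))).

Definition U_phi (mu nu : 'cV[R]_n) (gamma : R) (phi : R -> \bar R) : set 'M[R]_n :=
  [set X : 'M[R]_n | T_phi mu nu phi X /\ forall i j, 0 <= G_phi gamma phi X i j].

Definition mx_maxabs (A : 'M[R]_n) : R :=
  \big[Num.max/0]_(i < n) \big[Num.max/0]_(j < n) `|A i j|.

End Bregman.

(* Main.v *)
Require Import Defs.
From HB Require Import structures.
From mathcomp Require Import all_boot all_order all_algebra.
From mathcomp Require Import all_classical all_reals all_analysis.
From mathcomp Require Import zify ring lra.
Import Order.TTheory GRing.Theory Num.Theory.
Import numFieldNormedType.Exports.
Local Open Scope classical_set_scope.
Local Open Scope ring_scope.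



Lemma maxabs_ge (R : realType) n (A : 'M[R]_n) i j : `|A i j| <= mx_maxabs A.
Proof.
rewrite /mx_maxabs; apply: le_trans (le_bigmax _ _ i).
exact: (le_bigmax _ (fun j => `|A i j|) j).
Qed.

Lemma maxabs_le (R : realType) n (A : 'M[R]_n) c : 0 <= c ->
  (forall i j, `|A i j| <= c) -> mx_maxabs A <= c.
Proof.
move=> c0 H; rewrite /mx_maxabs; apply: bigmax_le => // i _.
by apply: bigmax_le => // j _.
Qed.

Lemma maxabs_ge0 (R : realType) n (A : 'M[R]_n) : 0 <= mx_maxabs A.
Proof.
rewrite /mx_maxabs; elim/big_ind: _ => [//|x y x0 y0|i _].
  by rewrite le_max x0.
by elim/big_ind: _ => [//|x y x0 y0|j _]; rewrite ?le_max ?x0.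
Qed.

Set Implicit Arguments. Unset Strict Implicit.



Lemma lin_der (R : realType) (a d s : R) : is_derive s 1 (fun u : R => a + u * d) d.
Proof.
have H1 : is_derive s 1 (fun u : R => u * d) d.
  have := @is_deriveM _ _ id (cst d) s 1 1 0 (is_derive_id _ _) (is_derive_cst _ _ _).
  rewrite scaler0 add0r /= => H; apply: (is_derive_eq H); exact: mulr1.
have := is_deriveD (is_derive_cst a s 1) H1.
by rewrite add0r.
Qed.

Lemma term_der (R : realType) (psi : R -> R) (c gam a d s : R) :
  derivable psi (a + s * d) 1 ->
  is_derive s 1 (fun u : R => c * (a + u * d) + gam * psi (a + u * d))
    (c * d + gam * ('D_1 psi (a + s * d) * d)).
Proof.
move=> dpsi.
have Hc := @is_deriveM _ _ (cst c) (fun u : R => a + u * d) s 1 0 d (is_derive_cst _ _ _) (lin_der a d s).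
have Hp := @is_derive1_comp _ psi (fun u : R => a + u * d) s _ _ (derivableP dpsi) (lin_der a d s).
have Hg := @is_deriveM _ _ (cst gam) (psi \o (fun u : R => a + u * d)) s 1 0 _ (is_derive_cst _ _ _) Hp.
have := is_deriveD Hc Hg.
rewrite /= !scaler0 !addr0.
by [].
Qed.

Lemma dm1 (R : realType) n (a b : 'I_n) :
  delta_mx a b *m (const_mx 1 : 'cV[R]_n) = delta_mx a 0.
Proof.
apply/matrixP => k z; rewrite !mxE (bigD1 b) //= big1 ?addr0.
  by rewrite !mxE !eqxx ord1 eqxx !andbT mulr1.
by move=> l lb; rewrite !mxE (negbTE lb) andbF mul0r.
Qed.

Lemma sum_delta (R : realType) n (A : 'M[R]_n) (a b : 'I_n) :
  \sum_k \sum_l A k l * delta_mx a b k l = A a b.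
Proof.
rewrite (bigD1 a) //= [X in _ + X]big1 ?addr0 => [|k ka].
  rewrite (bigD1 b) //= [X in _ + X]big1 ?addr0 => [|l lb].
    by rewrite mxE !eqxx mulr1.
  by rewrite mxE (negbTE lb) andbF mulr0.
by apply: big1 => l _; rewrite mxE (negbTE ka) mulr0.
Qed.

Lemma keyG (R : realType) n (mu nu : 'cV[R]_n) gamma phi (C X : 'M[R]_n) i j :
  bregman_assumption phi -> S_h C -> F_argmin mu nu gamma phi C X ->
  (forall k l, 0 < X k l < 1) -> i != j -> C i j = G_phi gamma phi X i j.
Proof.
move=> [_ sub01 [[_ pfin] _ _ _ ES] _] [C0 [CT Cd]] [tX Xmin] X01 ij.
pose psi := fun y => fine (phi y).
have der : forall y, interior (edom phi) y -> derivable psi y 1.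
  by case: ES => _ [].
have int01 : forall y : R, 0 < y < 1 -> interior (edom phi) y.
  by move=> y y01; apply: sub01; rewrite /= in_itv /=.
have phiE : forall y : R, 0 < y < 1 -> phi y = (psi y)%:E.
  move=> y /int01 /interior_subset yD; rewrite /psi fineK //.
  by rewrite fin_numElt (pfin y) yD.
pose D : 'M[R]_n := delta_mx i i + delta_mx j j - delta_mx i j - delta_mx j i.
pose g : R -> R := \sum_(k < n) \sum_(l < n)
   (fun u : R => C k l * (X k l + u * D k l) + gamma * psi (X k l + u * D k l)).
have gE : forall u, g u = \sum_k \sum_l
   (C k l * (X k l + u * D k l) + gamma * psi (X k l + u * D k l)).
  move=> u; rewrite /g fct_sumE; apply: eq_bigr => k _; by rewrite fct_sumE.
pose P u := forall k l, 0 < X k l + u * D k l < 1.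
have objE : forall u, P u -> objective gamma phi C (X + u *: D) = (g u)%:E.
  move=> u Pu; rewrite /objective gE.
  have -> : (\sum_i \sum_j phi ((X + u *: D)%R i j) =
        ((\sum_i \sum_j psi (X i j + u * D i j))%R)%:E)%E.
    rewrite -sumEFin; apply: eq_bigr => k _; rewrite -sumEFin; apply: eq_bigr => l _.
    rewrite mxE; have -> : (u *: D) k l = u * D k l by rewrite mxE.
    apply: phiE; exact: Pu.
  rewrite -EFinM -EFinD; congr EFin.
  rewrite mulr_sumr -big_split /=; apply: eq_bigr => k _.
  rewrite mulr_sumr -big_split /=; apply: eq_bigr => l _.
  by rewrite !mxE.
have Dr : D *m (const_mx 1 : 'cV[R]_n) = 0.
  by rewrite /D !mulmxDl !mulNmx !dm1 (addrC (delta_mx i 0)) addrK subrr.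
have Dc : D^T *m (const_mx 1 : 'cV[R]_n) = 0.
  by rewrite /D !raddfB raddfD /= !trmx_delta !mulmxDl !mulNmx !dm1 addrK subrr.
have inT : forall u, P u -> transport_polytope mu nu (X + u *: D).
  move=> u Pu; case: tX => _ [Hr Hc]; split.
    move=> k l; rewrite mxE; have -> : (u *: D) k l = u * D k l by rewrite mxE.
    by case/andP: (Pu k l) => /ltW.
  split; first by rewrite mulmxDl -scalemxAl Dr scaler0 addr0.
  by rewrite raddfD /= linearZ /= mulmxDl -scalemxAl Dc scaler0 addr0.
have nearP : \forall u \near (0:R), forall k l, 0 < X k l + u * D k l < 1.
  apply: (@filter_forall R _ (fun k u => forall l, 0 < X k l + u * D k l < 1) (nbhs (0:R)) _) => k.
  apply: (@filter_forall R _ (fun l u => 0 < X k l + u * D k l < 1) (nbhs (0:R)) _) => l.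
  have cv : (fun u : R => X k l + u * D k l) @ (0:R) --> X k l.
    case: (lin_der (X k l) (D k l) 0) => /derivable1_diffP dd _.
    have H := differentiable_continuous dd.
    have E : X k l = X k l + 0 * D k l by rewrite mul0r addr0.
    by rewrite {2}E; exact: H.
  case/andP: (X01 k l) => x0 x1.
  near=> u; apply/andP; split; near: u.
    exact: (@cvgr_gt _ _ _ _ _ _ cv _ x0).
  exact: (@cvgr_lt _ _ _ _ _ _ cv _ x1).
move/nbhs_ballP: nearP => [e e0 He].
have inB : forall u, u \in `]-e, e[ -> P u.
  move=> u; rewrite in_itv /= => uin; apply: He.
  by rewrite /ball /= sub0r normrN ltr_norml.
have P0 : P 0 by move=> k l; rewrite mul0r addr0; exact: X01.
have mn : forall u, u \in `]-e, e[ -> g 0 <= g u.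
  move=> u /inB Pu; have := Xmin _ (inT u Pu).
  have := objE 0 P0; rewrite scale0r addr0 => ->.
  by rewrite objE // lee_fin.
have drv : forall u, P u -> is_derive u 1 g (\sum_k \sum_l
     (C k l * D k l + gamma * ('D_1 psi (X k l + u * D k l) * D k l))).
  move=> u Pu; apply: is_derive_sum => k; apply: is_derive_sum => l.
  by apply: term_der; apply: der; apply: int01; exact: Pu.
have d0 : is_derive (0:R) 1 g 0.
  apply: (@derive1_at_min _ g (-e) e).
  - by rewrite lerNl; apply: (@le_trans _ _ 0); rewrite ?oppr_le0 ltW.
  - by move=> u /inB Pu; case: (drv u Pu).
  - by rewrite in_itv /= oppr_lt0 e0.
  - exact: mn.
have S0 := etrans (esym (@derive_val _ _ _ _ _ _ _ (drv 0 P0))) (@derive_val _ _ _ _ _ _ _ d0).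
pose A : 'M[R]_n := C + gamma *: map_mx (phid phi) X.
have SA : \sum_k \sum_l A k l * D k l = 0.
  apply: (etrans _ S0); apply: eq_bigr => k _; apply: eq_bigr => l _.
  rewrite mul0r addr0 !mxE -derive1E /phid /psi; ring.
have : \sum_k \sum_l A k l * D k l = A i i + A j j - A i j - A j i.
  have -> : \sum_k \sum_l A k l * D k l =
     \sum_k \sum_l A k l * delta_mx i i k l + \sum_k \sum_l A k l * delta_mx j j k l
     - \sum_k \sum_l A k l * delta_mx i j k l - \sum_k \sum_l A k l * delta_mx j i k l.
    rewrite -!sumrN -!big_split /=; apply: eq_bigr => k _.
    rewrite -!sumrN -!big_split /=; apply: eq_bigr => l _.
    rewrite !mxE; ring.
  by rewrite !sum_delta.
rewrite SA !mxE !Cd.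
have -> : C j i = C i j by have := congr1 (fun M : 'M[R]_n => M i j) CT; rewrite mxE.
move=> H; lra.
Unshelve. all: by end_near.
Qed.



Lemma lt1 (R : realType) n (mu nu : 'cV[R]_n) (X : 'M[R]_n) :
  (1 < n)%N -> prob_vec mu -> transport_polytope mu nu X ->
  (forall k l, 0 < X k l) -> forall k l, X k l < 1.
Proof.
move=> n1 [mu0 mu1] [X0 [Xmu _]] Xpos k l.
have [l' ll'] : exists l' : 'I_n, l' != l.
  have h : ((if val l == 0 then 1 else 0) < n)%N by case: ifP => //; lia.
  exists (Ordinal h); apply/eqP => /(congr1 val) /=.
  case: eqP => [-> //|ne e]; by apply: ne.
have rs : mu k 0 = \sum_m X k m.
  rewrite -Xmu mxE; apply: eq_bigr => m _; by rewrite mxE mulr1.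
have mule1 : mu k 0 <= 1.
  rewrite -mu1 (bigD1 k) //= lerDl; exact: sumr_ge0.
have : X k l + X k l' <= mu k 0.
  rewrite rs (bigD1 l) //= lerD2l (bigD1 l') //= lerDl.
  by apply: sumr_ge0 => m _.
have := Xpos k l'; lra.
Qed.



Lemma allG (R : realType) n (mu nu : 'cV[R]_n) gamma phi (C X : 'M[R]_n) :
  prob_vec mu -> bregman_assumption phi -> S_h C -> F_argmin mu nu gamma phi C X ->
  T_phi mu nu phi X -> forall i j, C i j = G_phi gamma phi X i j.
Proof.
move=> pmu bA SC FX [tX [bX _]] i j.
have [<-|ij] := eqVneq i j.
  case: SC => _ [_ ->]; rewrite mxE.
  by rewrite addrK subrr mulr0.
apply: (keyG bA SC FX _ ij) => k l.
have -> : X k l < 1.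
  apply: lt1 pmu tX _ k l; last by move=> a b; case/andP: (bX a b).
  rewrite ltnNge; apply/negP => n1; move/negP: ij; apply; apply/eqP/val_inj.
  by move: (ltn_ord i) (ltn_ord j) n1 => /=; lia.
by case/andP: (bX k l) => ->.
Qed.

Unset Implicit Arguments.
Theorem proposition4 (R : realType) (n : nat) (mu nu : 'cV[R]_n) (gamma : R)
    (phi : R -> \bar R) (Xh Xt Ch Ct : 'M[R]_n) :
  (0 < n)%N -> prob_vec mu -> prob_vec nu -> 0 < gamma ->
  bregman_assumption phi ->
  phid phi x @[x --> 0^'+] --> -oo ->
  U_phi mu nu gamma phi Xh -> U_phi mu nu gamma phi Xt ->
  S_h Ch -> S_h Ct ->
  F_argmin mu nu gamma phi Ch = [set Xh] ->
  F_argmin mu nu gamma phi Ct = [set Xt] ->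
  mx_maxabs (Ch - Ct) <=
    2 * gamma * mx_maxabs (map_mx (phid phi) Xh - map_mx (phid phi) Xt).
Proof.
move=> n0 pmu pnu g0 bA _ [Th _] [Tt _] Sh St Fh Ft.
have Xh_in : F_argmin mu nu gamma phi Ch Xh by rewrite Fh.
have Xt_in : F_argmin mu nu gamma phi Ct Xt by rewrite Ft.
have Eh := allG pmu bA Sh Xh_in Th.
have Et := allG pmu bA St Xt_in Tt.
set M := mx_maxabs (map_mx _ _ - _).
have M0 : 0 <= M by exact: maxabs_ge0.
apply: maxabs_le; first by rewrite !mulr_ge0 // ltW.
move=> i j; rewrite !mxE Eh Et !mxE.
set d := fun k l => phid phi (Xh k l) - phid phi (Xt k l).
have dM k l : `|d k l| <= M.
  by have := @maxabs_ge _ _ (map_mx (phid phi) Xh - map_mx (phid phi) Xt) k l; rewrite !mxE.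
have -> : gamma / 2 * (phid phi (Xh i i) + phid phi (Xh j j) - phid phi (Xh i j) - phid phi (Xh j i)) -
    gamma / 2 * (phid phi (Xt i i) + phid phi (Xt j j) - phid phi (Xt i j) - phid phi (Xt j i))
  = gamma / 2 * (d i i + d j j - d i j - d j i) by rewrite /d; ring.
rewrite normrM ger0_norm; last by rewrite divr_ge0 // ltW.
have H : `|d i i + d j j - d i j - d j i| <= 4 * M.
  apply: le_trans (ler_normB _ _) _.
  have -> : 4 * M = M + M + M + M by ring.
  apply: lerD => //; apply: le_trans (ler_normB _ _) _; apply: lerD => //.
  by apply: le_trans (ler_normD _ _) _; apply: lerD.
have g2 : 0 <= gamma / 2 by rewrite divr_ge0 ?ltW.
apply: (le_trans (ler_wpM2l g2 H)).
rewrite le_eqVlt; apply/orP; left; apply/eqP; field => //.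
Qed.
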